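(* Every WHB-algebra $\mathbf A$ is isomorphic to a subalgebra of $\mathcal A(\mathcal F(\mathbf A))=(\mathrm{Up}(X(\mathbf A)),\cap,\cup,\Rightarrow_{R_{\mathbf A}},\Leftarrow_{S_{\mathbf A}},\emptyset,X(\mathbf A))$.
   Context: A WHB-algebra is an algebra $(A,\wedge,\vee,\to,\leftarrow,0,1)$ such that $(A,\wedge,\vee,0,1)$ is a bounded distributive lattice and for all $a,b,c\in A$: $a\to a=1$; $a\to(b\wedge c)=(a\to b)\wedge(a\to c)$; $(a\vee b)\to c=(a\to c)\wedge(b\to c)$; $(a\to b)\wedge(b\to c)\le a\to c$; $a\leftarrow a=0$; $(a\vee b)\leftarrow c=(a\leftarrow c)\vee(b\leftarrow c)$; $a\leftarrow(b\wedge c)=(a\leftarrow b)\vee(a\leftarrow c)$; $a\leftarrow c\le(a\leftarrow b)\vee(b\leftarrow c)$; $a\wedge((a\to b)\leftarrow 0)\le b$; $a\le b\vee(1\to(a\leftarrow b))$. $X(\mathbf A)$ is the set of prime filters of $\mathbf A$, ordered by inclusion; $\mathrm{Up}(X(\mathbf A))$ is the set of its upsets. $(P,Q)\in R_{\mathbf A}$ iff for all $a,b$, $a\to b\in P$ and $a\in Q$ imply $b\in Q$; $(P,Q)\in S_{\mathbf A}$ iff for all $a,b$, $a\in Q$ and $b\notin Q$ imply $a\leftarrow b\in P$. $\mathcal F(\mathbf A)=(X(\mathbf A),\subseteq,R_{\mathbf A},S_{\mathbf A})$. For upsets $U,V$: $U\Rightarrow_R V=\{x\colon R(x)\cap U\subseteq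 V\}$ and $U\Leftarrow_S V=\{x\colon S(x)\cap(U\setminus V)\neq\emptyset\}$, where $\mathcal R(x)=\{y\colon(x,y)\in\mathcal R\}$. *)

(* Defs.v *)
From Stdlib Require Import Classical FunctionalExtensionality PropExtensionality.

Set Implicit Arguments.

Record WHB := {
  car :> Type;
  meet : car -> car -> car;
  join : car -> car -> car;
  imp : car -> car -> car;
  coimp : car -> car -> car;
  bot : car;
  top : car;
  meetA : forall a b c, meet a (meet b c) = meet (meet a b) c;
  joinA : forall a b c, join a (join b c) = join (join a b) c;
  meetC : forall a b, meet a b = meet b a;
  joinC : forall a b, join a b = join b a;
  meet_absorb : forall a b, meet a (join a b) = a;
  join_absorb : forall a b, join a (meet a b) = a;
  meet_joinD : forall a b c, meet a (join b c) = join (meet a b) (meet a c);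
  join_bot : forall a, join a bot = a;
  meet_top : forall a, meet a top = a;
  (* WHB axioms, with a <= b  :=  meet a b = a *)
  imp_refl : forall a, imp a a = top;
  imp_meet : forall a b c, imp a (meet b c) = meet (imp a b) (imp a c);
  imp_join : forall a b c, imp (join a b) c = meet (imp a c) (imp b c);
  imp_trans : forall a b c,
      meet (meet (imp a b) (imp b c)) (imp a c) = meet (imp a b) (imp b c);
  coimp_refl : forall a, coimp a a = bot;
  coimp_join : forall a b c, coimp (join a b) c = join (coimp a c) (coimp b c);
  coimp_meet : forall a b c, coimp a (meet b c) = join (coimp a b) (coimp a c);
  coimp_trans : forall a b c,
      meet (coimp a c) (join (coimp a b) (coimp b c)) = coimp a c;
  ax9 : forall a b, meet (meet a (coimp (imp a b) bot)) b
                    = meet a (coimp (imp a b) bot);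
  ax10 : forall a b, meet a (join b (imp top (coimp a b))) = a
}.

Arguments meet {w} _ _.
Arguments join {w} _ _.
Arguments imp {w} _ _.
Arguments coimp {w} _ _.

Section Frame.
Variable A : WHB.

Definition le (a b : A) : Prop := meet a b = a.

Definition prime_filter (P : A -> Prop) : Prop :=
  P (top A) /\
  (forall a b, P a -> le a b -> P b) /\
  (forall a b, P a -> P b -> P (meet a b)) /\
  ~ P (bot A) /\
  (forall a b, P (join a b) -> P a \/ P b).

Definition pfilter : Type := { P : A -> Prop | prime_filter P }.

Definition pf (P : pfilter) : A -> Prop := proj1_sig P.

Definition pf_le (P Q : pfilter) : Prop := forall a, pf P a -> pf Q a.

Definition is_upset (U : pfilter -> Prop) : Prop :=
  forall P Q, pf_le P Q -> U P -> U Q.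

Definition RA (P Q : pfilter) : Prop :=
  forall a b, pf P (imp a b) -> pf Q a -> pf Q b.

Definition SA (P Q : pfilter) : Prop :=
  forall a b, pf Q a -> ~ pf Q b -> pf P (coimp a b).

Definition set_cap (U V : pfilter -> Prop) : pfilter -> Prop :=
  fun x => U x /\ V x.
Definition set_cup (U V : pfilter -> Prop) : pfilter -> Prop :=
  fun x => U x \/ V x.
Definition set_empty : pfilter -> Prop := fun _ => False.
Definition set_full : pfilter -> Prop := fun _ => True.

Definition impR (U V : pfilter -> Prop) : pfilter -> Prop :=
  fun x => forall y, RA x y -> U y -> V y.

Definition coimpS (U V : pfilter -> Prop) : pfilter -> Prop :=
  fun x => exists y, SA x y /\ U y /\ ~ V y.

Definition embeds_into_complex_algebra (h : A -> (pfilter -> Prop)) : Prop :=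
  (forall a, is_upset (h a)) /\
  (forall a b, h a = h b -> a = b) /\
  (forall a b, h (meet a b) = set_cap (h a) (h b)) /\
  (forall a b, h (join a b) = set_cup (h a) (h b)) /\
  (forall a b, h (imp a b) = impR (h a) (h b)) /\
  (forall a b, h (coimp a b) = coimpS (h a) (h b)) /\
  h (bot A) = set_empty /\
  h (top A) = set_full.

End Frame.

(* Main.v *)
Require Import Defs.
From Stdlib Require Import Classical FunctionalExtensionality PropExtensionality.
From mathcomp Require classical_sets.
Section Lat.
Variables (T : Type) (m j : T -> T -> T).
Hypotheses (mA : forall a b c, m a (m b c) = m (m a b) c)
  (jA : forall a b c, j a (j b c) = j (j a b) c)
  (mC : forall a b, m a b = m b a) (jC : forall a b, j a b = j b a)
  (mabs : forall a b, m a (j a b) = a) (jabs : forall a b, j a (m a b) = a).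

Definition lle x y := m x y = x.

Lemma lle_refl x : lle x x.
Proof. unfold lle. rewrite <- (jabs x x) at 2. apply mabs. Qed.

Lemma lle_trans x y z : lle x y -> lle y z -> lle x z.
Proof. unfold lle; intros H1 H2. rewrite <- H1, <- mA, H2. reflexivity. Qed.

Lemma lle_j x y : lle x y <-> j x y = y.
Proof. unfold lle; split; intro H.
- rewrite <- H, jC, mC. apply jabs.
- rewrite <- H. apply mabs. Qed.

Lemma lle_jl x y : lle x (j x y).
Proof. apply mabs. Qed.
Lemma lle_jr x y : lle y (j x y).
Proof. rewrite jC; apply mabs. Qed.
Lemma j_lub x y z : lle x z -> lle y z -> lle (j x y) z.
Proof. rewrite !lle_j; intros H1 H2. rewrite <- jA, H2, H1. reflexivity. Qed.
Lemma j_mono x y x' y' : lle x x' -> lle y y' -> lle (j x y) (j x' y').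
Proof. intros; apply j_lub; eapply lle_trans; eauto using lle_jl, lle_jr. Qed.

Lemma max_ideal (D I0 : T -> Prop) b :
 (forall x y, D x -> lle x y -> D y) ->
 (forall x y, I0 y -> lle x y -> I0 x) -> (forall x y, I0 x -> I0 y -> I0 (j x y)) -> I0 b ->
 (forall x, I0 x -> ~ D x) ->
 exists I, (forall x, I0 x -> I x) /\ (forall x y, I y -> lle x y -> I x) /\
   (forall x y, I x -> I y -> I (j x y)) /\ (forall x, I x -> ~ D x) /\
   (forall x, ~ I x -> exists i, I i /\ D (j i x)).
Proof.
intros Dup I0dn I0j I0b I0D.
pose (Good := fun K : T -> Prop => (forall x y, K y -> lle x y -> K x) /\
   (forall x y, K x -> K y -> K (j x y)) /\ (forall x, K x -> ~ D x)).
destruct (@classical_sets.Zorn_bigcup T (fun A => Good (fun x => I0 x \/ A x))) as [A [HA Hmax]].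
- intros F HF Htot. unfold classical_sets.bigcup; simpl.
  split; [|split].
  + intros x y [Hy|[Y FY Yy]] Hxy; [left; eauto|].
    destruct (HF Y FY) as [G1 _]. destruct (G1 x y (or_intror Yy) Hxy) as [?|?]; [left; auto|right; exists Y; auto].
  + intros x y [Hx|[X FX Xx]] [Hy|[Y FY Yy]].
    * left; auto.
    * destruct (HF Y FY) as [_ [G2 _]]. destruct (G2 x y (or_introl Hx) (or_intror Yy)); [left; auto|right; exists Y; auto].
    * destruct (HF X FX) as [_ [G2 _]]. destruct (G2 x y (or_intror Xx) (or_introl Hy)); [left; auto|right; exists X; auto].
    * destruct (Htot X Y FX FY) as [S|S].
      -- destruct (HF Y FY) as [_ [G2 _]]. destruct (G2 x y (or_intror (S x Xx)) (or_intror Yy)); [left; auto|right; exists Y; auto].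
      -- destruct (HF X FX) as [_ [G2 _]]. destruct (G2 x y (or_intror Xx) (or_intror (S y Yy))); [left; auto|right; exists X; auto].
  + intros x [Hx|[X FX Xx]]; [auto|]. destruct (HF X FX) as [_ [_ G3]]. apply G3; auto.
  pose (K := fun x => I0 x \/ A x).
  destruct HA as [K1 [K2 K3]].
  exists K. split; [intros; left; auto|]. split; [exact K1|]. split; [exact K2|]. split; [exact K3|].
  intros x Kx. apply NNPP; intro Hn.
  assert (Hn' : forall i, K i -> ~ D (j i x)) by (intros i Ki Di; apply Hn; exists i; auto).
  pose (B := fun z => A z \/ exists k, K k /\ lle z (j k x)).
  assert (HB : forall z, I0 z \/ B z -> exists k, K k /\ lle z (j k x)).
  { intros z [Hz|[Hz|Hz]]; [exists z; split; [left; auto|apply lle_jl]|exists z; split; [right; auto|apply lle_jl]|exact Hz]. }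
  apply (Hmax B).
  + split.
    * intros z Az; left; auto.
    * intros Hs. apply Kx. right. apply Hs. right. exists b. split; [left; auto|apply lle_jr].
  + split; [|split].
    * intros z w Hw Hzw. destruct (HB w Hw) as [k [Kk Hk]]. right; right; exists k; split; eauto using lle_trans.
    * intros z w Hz Hw. destruct (HB z Hz) as [k1 [Kk1 Hk1]]. destruct (HB w Hw) as [k2 [Kk2 Hk2]].
      right; right; exists (j k1 k2). split; [apply K2; auto|].
      apply j_lub; eapply lle_trans; eauto; apply j_mono; auto using lle_jl, lle_jr, lle_refl.
    * intros z Hz Dz. destruct (HB z Hz) as [k [Kk Hk]]. apply (Hn' k Kk). eauto.
Qed.
End Lat.
Section W.
Variable A : WHB.

Definition L := @lle A meet.
Lemma L_refl x : L x x. Proof. apply (@lle_refl A meet join); auto using meet_absorb, join_absorb. Qed.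
Lemma L_trans x y z : L x y -> L y z -> L x z. Proof. apply lle_trans; apply meetA. Qed.
Lemma L_j x y : L x y <-> join x y = y.
Proof. apply lle_j; auto using meetC, joinC, meet_absorb, join_absorb. Qed.
Lemma L_jl x y : L x (join x y). Proof. apply meet_absorb. Qed.
Lemma L_jr x y : L y (join x y). Proof. unfold L, lle; rewrite joinC; apply meet_absorb. Qed.
Lemma L_ml x y : L (meet x y) x.
Proof. unfold L, lle. pose proof (L_refl x) as E; unfold L, lle in E.
  rewrite <- meetA, (meetC _ y x), meetA, E. reflexivity. Qed.
Lemma L_mr x y : L (meet x y) y.
Proof. rewrite meetC; apply L_ml. Qed.
Lemma L_glb x y z : L z x -> L z y -> L z (meet x y).
Proof. unfold L, lle; intros H1 H2. rewrite meetA, H1, H2. reflexivity. Qed.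
Lemma L_antisym x y : L x y -> L y x -> x = y.
Proof. unfold L, lle; intros H1 H2. transitivity (meet x y); [symmetry; exact H1|rewrite meetC; exact H2]. Qed.
Lemma L_bot x : L (bot A) x.
Proof. apply L_j. rewrite joinC. apply join_bot. Qed.
Lemma L_top x : L x (top A). Proof. apply meet_top. Qed.
Lemma L_jlub x y z : L x z -> L y z -> L (join x y) z.
Proof. apply j_lub; auto using meetA, joinA, meetC, joinC, meet_absorb, join_absorb. Qed.
Lemma L_jmono x y x' y' : L x x' -> L y y' -> L (join x y) (join x' y').
Proof. intros; apply L_jlub; eapply L_trans; eauto using L_jl, L_jr. Qed.
Lemma L_mmono x y x' y' : L x x' -> L y y' -> L (meet x y) (meet x' y').
Proof. intros; apply L_glb; [apply (L_trans _ x)|apply (L_trans _ y)]; auto using L_ml, L_mr. Qed.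

Lemma joinD (i x y : A) : join i (meet x y) = meet (join i x) (join i y).
Proof. apply L_antisym.
- apply L_jlub. apply L_glb; apply L_jl. apply L_mmono; apply L_jr.
- rewrite meet_joinD. apply L_jlub.
  + apply (L_trans _ i); [apply L_mr|apply L_jl].
  + rewrite (meetC _ (join i x) y), meet_joinD. apply L_jlub.
    * apply (L_trans _ i); [apply L_mr|apply L_jl].
    * apply (L_trans _ (meet x y)); [apply L_glb; [apply L_mr|apply L_ml]|apply L_jr].
Qed.

Lemma imp_mono2 a b c : L b c -> L (imp a b) (imp a c).
Proof. unfold L, lle at 1; intro H. unfold L, lle. rewrite <- imp_meet, H. reflexivity. Qed.
Lemma imp_anti1 a a' c : L a a' -> L (imp a' c) (imp a c).
Proof. intro H. apply L_j in H. rewrite <- H, imp_join. apply L_ml. Qed.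
Lemma imp_tr a b c : L (meet (imp a b) (imp b c)) (imp a c).
Proof. apply imp_trans. Qed.
Lemma coimp_mono1 a a' b : L a a' -> L (coimp a b) (coimp a' b).
Proof. intro H. apply L_j in H. rewrite <- H, coimp_join. apply L_jl. Qed.
Lemma coimp_anti2 a b b' : L b b' -> L (coimp a b') (coimp a b).
Proof. intro H. unfold L, lle in H. rewrite <- H, coimp_meet. apply L_jr. Qed.
Lemma coimp_tr a b c : L (coimp a c) (join (coimp a b) (coimp b c)).
Proof. unfold L, lle. apply coimp_trans. Qed.
Lemma coimp_bot_l b : coimp (bot A) b = bot A.
Proof. apply L_antisym; [|apply L_bot]. apply (L_trans _ (coimp b b)); [apply coimp_mono1, L_bot|rewrite coimp_refl; apply L_refl]. Qed.

Section PF.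
Variable P : pfilter A.
Lemma pf_top : pf P (top A). Proof. apply (proj2_sig P). Qed.
Lemma pf_up a b : pf P a -> L a b -> pf P b. Proof. apply (proj2_sig P). Qed.
Lemma pf_meet a b : pf P a -> pf P b -> pf P (meet a b). Proof. apply (proj2_sig P). Qed.
Lemma pf_bot : ~ pf P (bot A). Proof. apply (proj2_sig P). Qed.
Lemma pf_prime a b : pf P (join a b) -> pf P a \/ pf P b. Proof. apply (proj2_sig P). Qed.
End PF.

Lemma prime_of_max (D I : A -> Prop) d b :
  (forall x y, D x -> L x y -> D y) -> (forall x y, D x -> D y -> D (meet x y)) -> D d ->
  I b -> (forall x y, I y -> L x y -> I x) -> (forall x y, I x -> I y -> I (join x y)) ->
  (forall x, I x -> ~ D x) -> (forall x, ~ I x -> exists i, I i /\ D (join i x)) ->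
  @prime_filter A (fun x => ~ I x).
Proof.
intros Dup Dm Dd Ib Idn Ij ID Imax.
split; [|split; [|split; [|split]]].
- intro It. apply (ID _ It). eapply Dup; eauto using L_top.
- intros x y Hx Hxy Hy. apply Hx. eauto.
- intros x y Hx Hy Hxy. destruct (Imax x Hx) as [i1 [I1 D1]]. destruct (Imax y Hy) as [i2 [I2 D2]].
  apply (ID (join (join i1 i2) (meet x y))). apply Ij; auto.
  rewrite joinD. apply Dm; [apply (Dup _ _ D1)|apply (Dup _ _ D2)]; apply L_jmono; auto using L_jl, L_jr, L_refl.
- intro Hb. apply Hb. eapply Idn; eauto using L_bot.
- intros x y Hxy. apply NNPP; intros Hn. apply Hxy. apply Ij; apply NNPP; intro; apply Hn; auto.
Qed.

Lemma max_ideal_A (D I0 : A -> Prop) b :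
 (forall x y, D x -> L x y -> D y) ->
 (forall x y, I0 y -> L x y -> I0 x) -> (forall x y, I0 x -> I0 y -> I0 (join x y)) -> I0 b ->
 (forall x, I0 x -> ~ D x) ->
 exists I, (forall x, I0 x -> I x) /\ (forall x y, I y -> L x y -> I x) /\
   (forall x y, I x -> I y -> I (join x y)) /\ (forall x, I x -> ~ D x) /\
   (forall x, ~ I x -> exists i, I i /\ D (join i x)).
Proof. apply max_ideal; auto using meetA, joinA, meetC, joinC, meet_absorb, join_absorb. Qed.

Lemma max_filter_A (D I0 : A -> Prop) b :
 (forall x y, D x -> L y x -> D y) ->
 (forall x y, I0 y -> L y x -> I0 x) -> (forall x y, I0 x -> I0 y -> I0 (meet x y)) -> I0 b ->
 (forall x, I0 x -> ~ D x) ->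
 exists I, (forall x, I0 x -> I x) /\ (forall x y, I y -> L y x -> I x) /\
   (forall x y, I x -> I y -> I (meet x y)) /\ (forall x, I x -> ~ D x) /\
   (forall x, ~ I x -> exists i, I i /\ D (meet i x)).
Proof.
assert (E : forall x y, @lle A join x y <-> L y x).
{ intros x y. rewrite L_j, joinC. unfold lle. split; auto. }
intros H1 H2 H3 H4 H5.
destruct (@max_ideal A join meet (@joinA A) (@meetA A) (@joinC A) (@meetC A) (@join_absorb A) (@meet_absorb A) D I0 b)
  as [I [K1 [K2 [K3 [K4 K5]]]]]; auto.
- intros x y Hx Hy; apply E in Hy; eauto.
- intros x y Hx Hy; apply E in Hy; eauto.
- exists I; repeat split; auto. intros x y Hy Hxy; apply (K2 x y Hy), E, Hxy.
Qed.

Definition hA (a : A) : pfilter A -> Prop := fun P => pf P a.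

Lemma separate a b : ~ L a b -> exists Q : pfilter A, pf Q a /\ ~ pf Q b.
Proof.
intro Hab.
destruct (max_ideal_A (fun x => L a x) (fun x => L x b) b) as [I [K1 [K2 [K3 [K4 K5]]]]].
- intros; eapply L_trans; eauto.
- intros; eapply L_trans; eauto.
- intros; apply L_jlub; auto.
- apply L_refl.
- intros x H1 H2. apply Hab. eapply L_trans; eauto.
- assert (PF : @prime_filter A (fun x => ~ I x)).
  { eapply (prime_of_max (fun x => L a x)); eauto.
    + intros; eapply L_trans; eauto.
    + intros; apply L_glb; auto.
    + apply L_refl.
    + apply K1, L_refl. }
  exists (exist _ _ PF). simpl. split.
  + intro Ia. apply (K4 a Ia), L_refl.
  + intro Hn; apply Hn, K1, L_refl.
Qed.

Lemma imp_rep (P : pfilter A) a b :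
  (forall Q, RA P Q -> pf Q a -> pf Q b) -> pf P (imp a b).
Proof.
intro H. apply NNPP; intro Hn.
destruct (max_ideal_A (fun x => pf P (imp a x)) (fun x => L x b) b) as [I [K1 [K2 [K3 [K4 K5]]]]].
- intros x y Hx Hxy. eapply pf_up; eauto. apply imp_mono2; auto.
- intros; eapply L_trans; eauto.
- intros; apply L_jlub; auto.
- apply L_refl.
- intros x H1 H2. apply Hn. eapply pf_up; eauto. apply imp_mono2; auto.
- assert (PF : @prime_filter A (fun x => ~ I x)).
  { eapply (prime_of_max (fun x => pf P (imp a x))); eauto.
    + intros x y Hx Hxy. eapply pf_up; eauto. apply imp_mono2; auto.
    + intros. rewrite imp_meet. apply pf_meet; auto.
    + rewrite imp_refl. apply pf_top.
    + apply K1, L_refl. }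
  pose (Q := exist _ _ PF : pfilter A).
  assert (HQ : RA P Q).
  { intros x y Hxy Hx. simpl in *. intro Iy.
    destruct (K5 x Hx) as [i [Ii Di]].
    apply (K4 (join i y)); [apply K3; auto|].
    eapply pf_up; [|apply (imp_tr a (join i x))].
    apply pf_meet; auto.
    rewrite imp_join. apply pf_meet.
    - eapply pf_up; [|apply imp_mono2, L_jl]. rewrite imp_refl. apply pf_top.
    - eapply pf_up; [exact Hxy|apply imp_mono2, L_jr]. }
  apply (H Q HQ); simpl.
  + intro Ia. apply (K4 a Ia). rewrite imp_refl. apply pf_top.
  + apply K1, L_refl.
Qed.

Lemma coimp_rep (P : pfilter A) a b :
  pf P (coimp a b) -> exists Q, SA P Q /\ pf Q a /\ ~ pf Q b.
Proof.
intro H.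
destruct (max_filter_A (fun x => ~ pf P (coimp x b)) (fun x => L a x) a) as [I [K1 [K2 [K3 [K4 K5]]]]].
- intros x y Hx Hyx Hy. apply Hx. eapply pf_up; eauto. apply coimp_mono1; auto.
- intros; eapply L_trans; eauto.
- intros; apply L_glb; auto.
- apply L_refl.
- intros x H1 H2. apply H2. eapply pf_up; eauto. apply coimp_mono1; auto.
- assert (Ib : forall x, I x -> pf P (coimp x b)) by (intros x Ix; apply NNPP, K4, Ix).
  assert (PF : @prime_filter A I).
  { split; [|split; [|split; [|split]]].
    + apply (K2 _ a); auto using L_top. apply K1, L_refl.
    + intros x y Hx Hxy. eauto.
    + auto.
    + intro Ib0. apply (pf_bot P). rewrite <- (coimp_bot_l b). auto.
    + intros x y Hxy. apply NNPP; intro Hn.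
      assert (Hx : ~ I x) by (intro; apply Hn; auto).
      assert (Hy : ~ I y) by (intro; apply Hn; auto).
      destruct (K5 x Hx) as [i1 [I1 D1]]. destruct (K5 y Hy) as [i2 [I2 D2]].
      pose (i := meet i1 i2).
      assert (Hi : I (meet i (join x y))) by (apply K3; [apply K3|]; auto).
      rewrite meet_joinD in Hi. apply Ib in Hi. rewrite coimp_join in Hi.
      destruct (pf_prime _ _ _ Hi) as [Hp|Hp].
      * apply D1. apply (pf_up _ _ _ Hp). apply coimp_mono1, L_mmono; unfold i; [apply L_ml|apply L_refl].
      * apply D2. apply (pf_up _ _ _ Hp). apply coimp_mono1, L_mmono; unfold i; [apply L_mr|apply L_refl]. }
  exists (exist _ _ PF). simpl. split; [|split].
  + intros x y Ix Iy. apply NNPP; intro Hn.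
    destruct (K5 y Iy) as [q [Iq Dq]].
    assert (Hqx : pf P (coimp (meet q x) b)) by (apply Ib, K3; auto).
    pose proof (pf_up _ _ _ Hqx (coimp_tr (meet q x) (meet q y) b)) as H1.
    destruct (pf_prime _ _ _ H1) as [H2|H2]; [|contradiction].
    rewrite coimp_meet in H2. destruct (pf_prime _ _ _ H2) as [H3|H3].
    * apply (pf_bot P). rewrite <- (coimp_refl _ q). eapply pf_up; eauto. apply coimp_mono1, L_ml.
    * apply Hn. eapply pf_up; eauto. apply coimp_mono1, L_mr.
  + apply K1, L_refl.
  + intro Ib0. apply (pf_bot P). rewrite <- (coimp_refl _ b). auto.
Qed.

Lemma ext (U V : pfilter A -> Prop) : (forall P, U P <-> V P) -> U = V.
Proof. intro H. apply functional_extensionality; intro; apply propositional_extensionality; auto. Qed.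

Lemma embed : embeds_into_complex_algebra hA.
Proof.
unfold hA; split; [|split; [|split; [|split; [|split; [|split; [|split]]]]]].
- intros a P Q HPQ Pa. apply HPQ, Pa.
- intros a b H. apply L_antisym; apply NNPP; intro Hn.
  + destruct (separate _ _ Hn) as [Q [H1 H2]]. apply H2.
    change ((fun P => pf P b) Q). rewrite <- H. exact H1.
  + destruct (separate _ _ Hn) as [Q [H1 H2]]. apply H2.
    change ((fun P => pf P a) Q). rewrite H. exact H1.
- intros a b. apply ext; intro P. unfold set_cap. split.
  + intro H; split; eapply pf_up; eauto using L_ml, L_mr.
  + intros [H1 H2]; apply pf_meet; auto.
- intros a b. apply ext; intro P. unfold set_cup. split.
  + apply pf_prime.
  + intros [H|H]; eapply pf_up; eauto using L_jl, L_jr.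
- intros a b. apply ext; intro P. unfold impR. split.
  + intros H Q HR Ha. eapply HR; eauto.
  + apply imp_rep.
- intros a b. apply ext; intro P. unfold coimpS. split.
  + apply coimp_rep.
  + intros [Q [HS [Ha Hb]]]. apply HS; auto.
- apply ext; intro P. unfold set_empty. split; [apply pf_bot|intros []].
- apply ext; intro P. unfold set_full. split; [auto|intros _; apply pf_top].
Qed.
End W.

Theorem theorem4p10 (A : WHB) :
  exists h : A -> (pfilter A -> Prop), embeds_into_complex_algebra h.
Proof. exists (@hA A). apply embed. Qed.
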